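(* Let $P=[-1,\infty)$ and let $\tilde v(x)=p(x)e^{-\lambda x}$, $\tilde w(x)=q(x)e^{-\lambda x}$, where $p$ is a positive rational function on $P$, $q$ is a polynomial and $\lambda>0$. Suppose that $\mathcal F_{\tilde v,\tilde w}$ vanishes on the affine-linear functions and that $P$ is $(\tilde v,\tilde w)$ K-stable. Then the $(\tilde v,\tilde w)$-cscK metric $\omega$ on $\mathbb C$ with moment image $P$ satisfies $\omega\in\mathcal H^\varepsilon_{\alpha,T}$ for every $\varepsilon\in(0,\tfrac12)$.
   Context: $S^1$ acts on $\mathbb C$ by rotation with generator $Y$ of period $2\pi$. A metric on $\mathbb C$ with moment image $P$ is an $S^1$-invariant Kähler metric with proper moment map $\mu$ with image $[-1,\infty)$. Write $H(x)=g(Y,Y)$ at points where $\mu=x$; the symplectic potential $u$ on $(-1,\infty)$ satisfies $u''=1/H$. The metric is $(\tilde v,\tilde w)$-cscK if $-(\tilde vH)''=\tilde w$ on $(-1,\infty)$ (equivalently $\tilde v(\mu)\mathrm{Scal}(\omega)+2\Delta_\omega\tilde v(\mu)+g(Y,Y)\tilde v''(\mu)=\tilde w(\mu)$). Under the stated K-stability such a metric exists, and it is unique since $H$ solves this ODE with $H(-1)=0$, $H'(-1)=2$. Futaki invariant: $\mathcal F_{\tilde v,\tilde w}(f)=2\tilde v(-1)f(-1)-\int_{-1}^\infty f\tilde w\,dx$. $P$ is $(\tilde v,\tilde w)$ K-stable if $\mathcal F_{\tilde v,\tilde w}(f)\ge0$ for every convex piecewise-linear $f$ (maximum of finitely many affine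 functions), with equality only for affine $f$. $P_\delta=[-1+\delta,\infty)$. Class $\mathcal H^\varepsilon_{\alpha,T}$ (with respect to the weight $v=\tilde v$): $\omega$ lies in it if (1) $\sup_P \tilde v^\varepsilon H^2<\infty$; (2) $\sup_P\tilde v^\varepsilon |H'|^2<\infty$; (3) there are $\bar\delta,C>0$ with $|H''|^2<C$ on $[-1,-1+\bar\delta]$; (4) $\sup_P|\tilde v^\varepsilon u|<\infty$ and $\sum_{k\le2}\sup_{P_\delta}|\tilde v^\varepsilon u^{(k)}|<\infty$ for all small $\delta>0$. *)

(* Defs.v *)
From HB Require Import structures.
From mathcomp Require Import all_boot all_order all_algebra.
From mathcomp Require Import all_classical all_reals all_analysis.
Set Implicit Arguments. Unset Strict Implicit. Unset Printing Implicit Defensive.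
Import Order.TTheory GRing.Theory Num.Theory.
Import numFieldNormedType.Exports.
Local Open Scope classical_set_scope.
Local Open Scope ring_scope.

Section Defs.
Variable R : realType.

Definition ratfun (a b : {poly R}) (x : R) : R := a.[x] / b.[x].

Definition positive_ratfun_on_P (a b : {poly R}) : Prop :=
  forall x : R, -1 <= x -> b.[x] != 0 /\ 0 < ratfun a b x.

Definition weight_v (a b : {poly R}) (lam : R) (x : R) : R :=
  ratfun a b x * expR (- (lam * x)).
Definition weight_w (q : {poly R}) (lam : R) (x : R) : R :=
  q.[x] * expR (- (lam * x)).

Definition Futaki (v w f : R -> R) : \bar R :=
  ((2 * v (-1) * f (-1))%:E -
   (\int[lebesgue_measure]_(x in `[(-1 : R)%R, +oo[%classic) (f x * w x)%:E))%E.

Definition affine_fun (f : R -> R) : Prop :=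
  exists a0 b0 : R, forall x, f x = a0 * x + b0.

Definition pl_max (a0 b0 : R) (s : seq (R * R)) (x : R) : R :=
  foldr (fun ab m => Num.max (ab.1 * x + ab.2) m) (a0 * x + b0) s.

Definition Futaki_vanishes_on_affine (v w : R -> R) : Prop :=
  forall a0 b0 : R, Futaki v w (fun x => a0 * x + b0) = 0%E.

Definition K_stable (v w : R -> R) : Prop :=
  forall (a0 b0 : R) (s : seq (R * R)),
    (0 <= Futaki v w (pl_max a0 b0 s))%E /\
    (Futaki v w (pl_max a0 b0 s) = 0%E ->
       exists c d : R, forall x, -1 <= x -> pl_max a0 b0 s x = c * x + d).

(* An S^1-invariant Kaehler metric on C with moment image [-1,oo), encoded by
   H(x) = g(Y,Y) at mu = x (H extended to a C^2-ish function on R; only its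
   restriction to [-1,oo) matters), which is (v,w)-cscK *)
Definition cscK_metric (v w H : R -> R) : Prop :=
  (forall x : R, derivable H x 1 /\ derivable (derive1 H) x 1) /\
  (forall x : R, -1 < x -> 0 < H x) /\
  H (-1) = 0 /\ derive1 H (-1) = 2 /\
  (forall x : R, -1 < x -> - (derive1 (derive1 (fun y => v y * H y)) x) = w x).

Definition symplectic_potential (H u : R -> R) : Prop :=
  forall x : R, -1 < x ->
    derivable u x 1 /\ derivable (derive1 u) x 1 /\ derive1 (derive1 u) x = (H x)^-1.

Definition in_H_class (v : R -> R) (eps : R) (H : R -> R) : Prop :=
  (exists C : R, forall x, -1 <= x -> v x `^ eps * H x ^+ 2 <= C) /\
  (exists C : R, forall x, -1 <= x -> v x `^ eps * (derive1 H x) ^+ 2 <= C) /\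
  (exists dbar C : R, 0 < dbar /\ 0 < C /\
     forall x, -1 <= x <= -1 + dbar -> (derive1 (derive1 H) x) ^+ 2 < C) /\
  (forall u : R -> R, symplectic_potential H u ->
     (exists C : R, forall x, -1 < x -> `|v x `^ eps * u x| <= C) /\
     (exists delta0 : R, 0 < delta0 /\ forall delta, 0 < delta < delta0 ->
        exists C : R, forall x, -1 + delta <= x ->
          `|v x `^ eps * u x| + `|v x `^ eps * derive1 u x|
            + `|v x `^ eps * derive1 (derive1 u) x| <= C)).

End Defs.

(* Main.v *)
Require Import Defs.
From HB Require Import structures.
From mathcomp Require Import all_boot all_order all_algebra.
From mathcomp Require Import all_classical all_reals all_analysis.
From mathcomp Require Import ring lra measurable_realfun.
Set Implicit Arguments. Unset Strict Implicit. Unset Printing Implicit Defensive.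
Import Order.TTheory GRing.Theory Num.Theory.
Import numFieldNormedType.Exports.
Local Open Scope ring_scope.
Local Open Scope classical_set_scope.


Section Poly.
Variable R : realType.
Variable lam : R.
Hypothesis lam0 : lam != 0.

Definition Dop (P : {poly R}) := P^`() - lam *: P.

Lemma Dop_exists P : exists Q, Dop Q = P.
Proof.
have [n] := ubnP (size P); elim: n P => [|n IH] P hP; first by [].
have [->|P0] := eqVneq P 0; first by exists 0; rewrite /Dop deriv0 scaler0 subr0.
have hs : (size (lam^-1 *: P^`()) < n)%N.
  by apply: leq_ltn_trans (size_scale_leq _ _) _; rewrite -ltnS; apply: leq_trans hP; exact: lt_size_deriv.
have [Q1 hQ1] := IH _ hs.
exists (Q1 - lam^-1 *: P); rewrite /Dop in hQ1 *.
rewrite derivB derivZ scalerBr scalerA mulfV // scale1r.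
have -> : Q1^`() - lam^-1 *: P^`() - (lam *: Q1 - P) = (Q1^`() - lam *: Q1) - lam^-1 *: P^`() + P by ring.
by rewrite hQ1 subrr add0r.
Qed.

Lemma Dop_inj Z : Dop Z = 0 -> Z = 0.
Proof.
move=> /eqP; rewrite /Dop subr_eq0 => /eqP h.
apply/eqP/negPn/negP => Z0.
have := lt_size_deriv Z0; rewrite h size_scale // ltnn //.
Qed.

Lemma DopB P Q : Dop (P - Q) = Dop P - Dop Q.
Proof. rewrite /Dop derivB scalerBr; ring. Qed.

Lemma DopN P : Dop (- P) = - Dop P.
Proof. rewrite /Dop derivN scalerN; ring. Qed.

Lemma Dop_Xmul r Q1 q : Dop r = Q1 -> Dop Q1 = - q -> Dop (r - 'X * Q1) = 'X * q.
Proof.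
move=> h1 h2; rewrite DopB h1 /Dop derivM derivX mul1r.
rewrite /Dop in h2. 
have -> : q = - (Q1^`() - lam *: Q1) by rewrite h2 opprK.
rewrite scalerAr; ring.
Qed.
End Poly.

Section Der.
Variable R : realType.
Variable lam : R.

Definition pe (P : {poly R}) (x : R) := P.[x] * expR (- (lam * x)).

Lemma is_derive_lin x : is_derive x (1:R) (fun y : R => - (lam * y)) (- lam).
Proof.
have -> : (fun y : R => - (lam * y)) = (- lam) \*: (@id R).
  apply/funext => y /=; rewrite /GRing.scale/=; ring.
apply: (is_derive_eq (is_deriveZ (-lam) (is_derive_id x 1))).
by rewrite [_%:A]mulr1.
Qed.

Lemma is_derive_E x : is_derive x (1:R) (fun y => expR (- (lam * y))) (- lam * expR (- (lam * x))).
Proof.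
have -> : (fun y => expR (- (lam * y))) = expR \o (fun y : R => - (lam * y)) by [].
apply: (is_derive_eq (is_derive1_comp (is_derive_expR _) (is_derive_lin x))).
by rewrite /= mulrC.
Qed.

Lemma is_derive_pe P x : is_derive x (1:R) (pe P) (pe (Dop lam P) x).
Proof.
have -> : pe P = (horner P) * (fun y => expR (- (lam * y))) by [].
apply: (is_derive_eq (is_deriveM (is_derive_poly P x) (is_derive_E x))).
rewrite /pe /Dop /GRing.scale /= hornerD hornerN hornerZ; ring.
Qed.

Definition RG (N d : {poly R}) (k : nat) (mu : R) (x : R) :=
  N.[x] / d.[x] ^+ k * expR (- (mu * x)).

Definition RGd (N d : {poly R}) (k : nat) (mu : R) : {poly R} :=
  N^`() * d - k%:R *: (N * d^`()) - mu *: (N * d).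

Lemma is_derive_RG (N d : {poly R}) (k : nat) (mu x : R) : d.[x] != 0 ->
  is_derive x (1:R) (RG N d k mu) (RG (RGd N d k mu) d k.+1 mu x).
Proof.
move=> dx.
have -> : RG N d k mu = (horner N) * (fun y => (d.[y] ^+ k)^-1) * (fun y => expR (- (mu * y))) by [].
have hE : is_derive x (1:R) (fun y => expR (- (mu * y))) (- mu * expR (- (mu * x))).
  have -> : (fun y => expR (- (mu * y))) = expR \o (fun y : R => - (mu * y)) by [].
  have hl : is_derive x (1:R) (fun y : R => - (mu * y)) (- mu).
    have -> : (fun y : R => - (mu * y)) = (- mu) \*: (@id R).
      by apply/funext => y /=; rewrite /GRing.scale/=; ring.
    apply: (is_derive_eq (is_deriveZ (-mu) (is_derive_id x 1))).
    by rewrite [_%:A]mulr1.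
  apply: (is_derive_eq (is_derive1_comp (is_derive_expR _) hl)).
  by rewrite /= mulrC.
have hX : is_derive x (1:R) ((horner d) ^+ k) ((k%:R * d.[x] ^+ k.-1) *: d^`().[x]).
  exact: is_deriveX.
have dk : ((horner d) ^+ k) x != 0 by rewrite exprfctE expf_neq0.
have hV := is_deriveV dk hX.
have -> : (fun y => (d.[y] ^+ k)^-1) = (fun y => (((horner d) ^+ k) y)^-1).
  by apply/funext => y; rewrite exprfctE.
apply: (is_derive_eq (is_deriveM (is_deriveM (is_derive_poly N x) hV) hE)).
rewrite /RG /RGd /GRing.scale /= !exprfctE !fctE !hornerE.
case: k dk {hX hV} => [|k] dk.
  rewrite !expr0 !expr1 /=; field. by [].
rewrite !exprS /=; field. by rewrite dx expf_neq0.
Qed.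
End Der.

Section Growth.
Variable R : realType.

Lemma poly_bound (P : {poly R}) : exists C, 0 <= C /\
  forall x, -1 <= x -> `|P.[x]| <= C * (2 + x) ^+ (size P).
Proof.
exists (\sum_(i < size P) `|P`_i|); split; first exact: sumr_ge0.
move=> x hx; rewrite horner_coef mulr_suml.
apply: le_trans (ler_norm_sum _ _ _) _; apply: ler_sum => i _.
rewrite normrM normrX ler_wpM2l //.
have h1 : `|x| <= 2 + x by rewrite ler_norml; apply/andP; split; lra.
apply: le_trans (lerXn2r _ _ _ h1) _; rewrite ?nnegrE //; first by lra.
apply: ler_weXn2l; first by lra.
exact: ltnW.
Qed.

Lemma exp_poly (n : nat) (c : R) : 0 < c -> exists C, forall x, -1 <= x ->
  (2 + x) ^+ n * expR (- (c * x)) <= C.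
Proof.
move=> c0.
case: n => [|m].
  exists (expR c) => x hx; rewrite expr0 mul1r ler_expR; nra.
set n := m.+1.
exists ((n%:R / c) ^+ n * expR (2 * c)) => x hx.
set t := 2 + x.
have t1 : 1 <= t by rewrite /t; lra.
have n0 : 0 < n%:R :> R by rewrite ltr0n.
have h1 : c * t / n%:R <= expR (c * t / n%:R).
  apply: le_trans (expR_ge1Dx _); lra.
have h2 : (c * t / n%:R) ^+ n <= expR (c * t).
  have e : expR (c * t) = expR (c * t / n%:R) ^+ n.
    rewrite -expRM_natl; congr expR; field; lra.
  rewrite e; apply: lerXn2r => //; rewrite nnegrE.
    apply: divr_ge0; nra.
  exact/ltW/expR_gt0.
have h3 : t ^+ n <= (n%:R / c) ^+ n * expR (c * t).
  have -> : t ^+ n = (n%:R / c) ^+ n * (c * t / n%:R) ^+ n.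
    rewrite -exprMn; congr (_ ^+ _); field; apply/andP; split; lra.
  apply: ler_wpM2l => //; apply: exprn_ge0; apply: divr_ge0; lra.
have -> : expR (2 * c) = expR (c * t) * expR (- (c * x)).
  by rewrite -expRD /t; congr expR; ring.
rewrite mulrA; apply: ler_wpM2r; first exact/ltW/expR_gt0.
exact: h3.
Qed.

Lemma poly_lower (P : {poly R}) : (forall x, -1 <= x -> P.[x] != 0) ->
  exists m, 0 < m /\ forall x, -1 <= x -> m <= `|P.[x]|.
Proof.
move=> hP.
have P0 : P != 0 by apply/eqP => P0; move: (hP (-1) (lexx _)); rewrite P0 horner0 eqxx.
set n := (size P).-1.
have sP : size P = n.+1 by rewrite /n prednK // size_poly_gt0.
set lc := P`_n.
have lc0 : lc != 0 by rewrite /lc /n -lead_coefE lead_coef_eq0.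
have lcp : 0 < `|lc| by rewrite normr_gt0.
set S := \sum_(i < n) `|P`_i|.
have S0 : 0 <= S by exact: sumr_ge0.
have decomp x : P.[x] = \sum_(i < n) P`_i * x ^+ i + lc * x ^+ n.
  by rewrite (@horner_coef_wide _ n.+1) ?sP // big_ord_recr.
have big x : 1 <= x -> `|\sum_(i < n) P`_i * x ^+ i| <= S * (x ^+ n / x).
  move=> x1; rewrite mulr_suml; apply: le_trans (ler_norm_sum _ _ _) _.
  apply: ler_sum => i _; rewrite normrM normrX ler_wpM2l //.
  have x0 : 0 < x by lra.
  rewrite ger0_norm ?(ltW x0) // ler_pdivlMr // -exprSr.
  by apply: ler_weXn2l => //; exact: ltn_ord.
set M := Num.max 1 (2 * S / `|lc|).
have far x : M <= x -> `|lc| / 2 <= `|P.[x]|.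
  move=> hx; have x1 : 1 <= x by apply: le_trans hx; rewrite le_max lexx.
  have xS : 2 * S / `|lc| <= x by apply: le_trans hx; rewrite le_max lexx orbT.
  have x0 : 0 < x by lra.
  have xn1 : 1 <= x ^+ n by apply: exprn_ege1.
  rewrite decomp addrC; apply: le_trans (lerB_normD _ _).
  rewrite normrM normrX (ger0_norm (ltW x0)).
  have h := big x x1.
  have hS : S / x <= `|lc| / 2.
    rewrite ler_pdivrMr // ; rewrite ler_pdivrMr // in xS; nra.
  have e : S * (x ^+ n / x) = (S / x) * x ^+ n by rewrite mulrA mulrAC.
  rewrite e in h.
  have h2 : (S / x) * x ^+ n <= (`|lc| / 2) * x ^+ n by apply: ler_wpM2r => //; lra.
  have h3 : `|lc| / 2 <= (`|lc| / 2) * x ^+ n by rewrite ler_peMr //; lra.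
  set A := `|\sum_(i < n) _|. set B := x ^+ n. move: h h2 h3; rewrite -/A -/B; lra.
have cP : {within `[(-1 : R), M], continuous (fun x => `|P.[x]|)}.
  apply: continuous_subspaceT => x.
  apply: (@continuous_comp _ _ _ (horner P) (@Num.norm _ R)); first exact: continuous_horner.
  exact: norm_continuous.
have hM : -1 <= M by rewrite le_max; apply/orP; left; lra.
have [c hc hmin] := EVT_min hM cP.
have c1 : -1 <= c by move: hc; rewrite in_itv /= => /andP[].
have Pc : 0 < `|P.[c]| by rewrite normr_gt0 hP.
exists (Num.min (`|lc| / 2) `|P.[c]|); split; first by rewrite lt_min; apply/andP; split => //; lra.
move=> x hx; have [xM|xM] := leP x M.
  rewrite ge_min; apply/orP; right; apply: hmin; rewrite in_itv /=; apply/andP; split => //.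
rewrite ge_min; apply/orP; left; apply: far; exact: ltW.
Qed.
End Growth.


Section Integral.
Variable R : realType.
Variable lam : R.
Hypothesis lam0 : 0 < lam.
Local Notation mu := (@lebesgue_measure R).

Lemma pe_cont (P : {poly R}) : continuous (pe lam P).
Proof.
move=> x; have [h _] := is_derive_pe lam P x.
exact/differentiable_continuous/derivable1_diffP.
Qed.

Lemma pe_decay (Q : {poly R}) : exists K, 0 < K /\
  forall x, -1 <= x -> `|pe lam Q x| <= K / (2 + x).
Proof.
have [C [C0 hC]] := poly_bound Q.
have [C2 hC2] := exp_poly (size Q).+1 lam0.
have C20 : 0 <= C2.
  apply: le_trans (hC2 (-1) (lexx _)); apply: mulr_ge0; first by apply: exprn_ge0; lra.
  exact/ltW/expR_gt0.
exists (C * C2 + 1); split; first by nra.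
move=> x hx; rewrite /pe normrM (ger0_norm (ltW (expR_gt0 _))).
have t0 : 0 < 2 + x by lra.
rewrite ler_pdivlMr //.
apply: le_trans (_ : C * C2 <= _); last by lra.
have := hC2 x hx; rewrite exprSr => h2.
have h1 := hC x hx.
have e0 := expR_gt0 (- (lam * x)).
have h3 : `|Q.[x]| * expR (- (lam * x)) * (2 + x) <= C * (2 + x) ^+ size Q * expR (- (lam * x)) * (2 + x).
  apply: ler_wpM2r; first lra. apply: ler_wpM2r; first lra. exact: h1.
apply: le_trans h3 _.
have -> : C * (2 + x) ^+ size Q * expR (- (lam * x)) * (2 + x) = C * ((2 + x) ^+ size Q * (2 + x) * expR (- (lam * x))) by ring.
by apply: ler_wpM2l.
Qed.

Lemma pe_cvg0 (Q : {poly R}) : pe lam Q x @[x --> +oo] --> 0.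
Proof.
have [K [K0 hK]] := pe_decay Q.
apply/cvgrPdist_le => e e0.
exists (Num.max 0 (K / e)); split; first by rewrite num_real.
move=> x; rewrite gt_max => /andP[x0 xK].
rewrite sub0r normrN; apply: le_trans (hK x _) _; first lra.
rewrite ler_pdivrMr; last lra.
rewrite ltr_pdivrMr // in xK; nra.
Qed.

Lemma integral_pe_ge0 (P Q : {poly R}) : Dop lam Q = P ->
  (forall x, -1 <= x -> 0 <= P.[x]) ->
  (\int[mu]_(x in `[(-1 : R)%R, +oo[%classic) (pe lam P x)%:E = (- pe lam Q (-1))%:E)%E.
Proof.
move=> hQ hP.
rewrite (@ge0_continuous_FTC2y R (pe lam P) (pe lam Q) (-1) 0).
- by rewrite sub0e EFinN.
- move=> x hx; rewrite /pe; apply: mulr_ge0; [exact: hP | exact/ltW/expR_gt0].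
- exact/continuous_subspaceT/pe_cont.
- exact: pe_cvg0.
- by move=> x _; have [h _] := is_derive_pe lam Q x.
- exact/cvg_at_right_filter/pe_cont.
- move=> x _; rewrite derive1E; have [_ ->] := is_derive_pe lam Q x; by rewrite hQ.
Qed.

Lemma pe_B (P Q : {poly R}) x : pe lam (P - Q) x = pe lam P x - pe lam Q x.
Proof. by rewrite /pe hornerD hornerN mulrBl. Qed.

Lemma integrable_pe_ge0 (P : {poly R}) l :
  (forall x, -1 <= x -> 0 <= pe lam P x) ->
  (\int[mu]_(x in `[(-1 : R)%R, +oo[%classic) (pe lam P x)%:E = l%:E)%E ->
  mu.-integrable `[(-1 : R)%R, +oo[%classic (EFin \o pe lam P).
Proof.
move=> h0 hI; apply/integrableP; split.
  apply/measurable_EFinP; apply: (@measurable_funS _ _ _ _ setT) => //.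
  apply: continuous_measurable_fun; exact: pe_cont.
rewrite (_ : (\int[mu]_(x in _) _)%E = \int[mu]_(x in `[(-1 : R)%R, +oo[%classic) (pe lam P x)%:E)%E.
  by rewrite hI ltry.
apply: eq_integral => x; rewrite inE /= in_itv /= andbT => hx.
by rewrite /= ger0_norm // h0.
Qed.

Lemma integral_pe (P Q : {poly R}) : Dop lam Q = P ->
  (\int[mu]_(x in `[(-1 : R)%R, +oo[%classic) (pe lam P x)%:E = (- pe lam Q (-1))%:E)%E.
Proof.
move=> hQ.
have lam0' : lam != 0 by rewrite gt_eqF.
have [C [C0 hC]] := poly_bound P.
set S := C *: ('X + 2%:P) ^+ (size P).
have Sx x : S.[x] = C * (2 + x) ^+ size P.
  by rewrite /S hornerZ horner_exp hornerD hornerX hornerC addrC.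
have hS x : -1 <= x -> 0 <= S.[x].
  by move=> hx; rewrite Sx; apply: mulr_ge0 => //; apply: exprn_ge0; lra.
have hP1 x : -1 <= x -> 0 <= (P + S).[x].
  move=> hx; rewrite hornerD Sx; have := hC x hx; rewrite ler_norml => /andP[h _]; lra.
have [Q1 hQ1] := Dop_exists lam0' (P + S).
have [QS hQS] := Dop_exists lam0' S.
have I1 := integral_pe_ge0 hQ1 hP1.
have IS := integral_pe_ge0 hQS hS.
have pe0 (T : {poly R}) : (forall x, -1 <= x -> 0 <= T.[x]) -> forall x, -1 <= x -> 0 <= pe lam T x.
  by move=> hT x hx; rewrite /pe; apply: mulr_ge0; [exact: hT | exact/ltW/expR_gt0].
have i1 := integrable_pe_ge0 (pe0 _ hP1) I1.
have iS := integrable_pe_ge0 (pe0 _ hS) IS.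
have -> : (\int[mu]_(x in `[(-1 : R)%R, +oo[%classic) (pe lam P x)%:E =
   \int[mu]_(x in `[(-1 : R)%R, +oo[%classic) ((pe lam (P + S) x)%:E - (pe lam S x)%:E))%E.
  apply: eq_integral => x _; rewrite -EFinB; congr EFin.
  by rewrite /pe hornerD mulrDl addrK.
rewrite integralB_EFin //; rewrite I1 IS -EFinB; congr EFin.
have -> : Q = Q1 - QS.
  apply/eqP; rewrite -subr_eq0; apply/eqP; apply: (Dop_inj lam0').
  by rewrite !DopB hQ1 hQS hQ; ring.
by rewrite pe_B; ring.
Qed.
End Integral.


Section Helpers.
Variable R : realType.

Lemma MVT_closed (f df : R -> R) (x y : R) : x <= y ->
  (forall z, x <= z <= y -> is_derive z (1:R) f (df z)) ->
  exists c, x <= c <= y /\ f y - f x = df c * (y - x).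
Proof.
move=> xy hd.
have h1 : forall z, z \in `]x, y[%R -> is_derive z (1:R) f (df z).
  move=> z; rewrite in_itv /= => /andP[h1 h2]; apply: hd; apply/andP; split; exact: ltW.
have h2 : {within `[x, y], continuous f}.
  apply: derivable_within_continuous => z; rewrite in_itv /= => hz.
  by have [h _] := hd z hz.
have [c hc e] := MVT_segment xy h1 h2.
by exists c; split => //; move: hc; rewrite in_itv.
Qed.

Lemma mono_le (f df : R -> R) (x y : R) : x <= y ->
  (forall z, x <= z <= y -> is_derive z (1:R) f (df z)) ->
  (forall z, x <= z <= y -> 0 <= df z) -> f x <= f y.
Proof.
move=> xy hd hp; have [c [hc e]] := MVT_closed xy hd.
rewrite -subr_ge0 e; apply: mulr_ge0; [exact: hp | lra].
Qed.

Lemma growth_int (f df : R -> R) (x0 C : R) (n : nat) : -1 <= x0 -> 0 <= C ->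
  (forall z, x0 <= z -> is_derive z (1:R) f (df z)) ->
  (forall z, x0 <= z -> `|df z| <= C * (2 + z) ^+ n) ->
  forall x, x0 <= x -> `|f x| <= (`|f x0| + C) * (2 + x) ^+ n.+1.
Proof.
move=> hx0 C0 hd hb x hx.
have [c [hc e]] := MVT_closed hx (fun z hz => hd z (proj1 (andP hz))).
have t1 : 1 <= 2 + x by lra.
have hpow : 1 <= (2 + x) ^+ n.+1 by apply: exprn_ege1.
have hc1 : `|df c| <= C * (2 + x) ^+ n.
  move/andP: hc => [h1 h2]; apply: le_trans (hb c h1) _; apply: ler_wpM2l => //.
  apply: lerXn2r; rewrite ?nnegrE; lra.
have -> : f x = f x0 + df c * (x - x0) by rewrite -e; ring.
apply: le_trans (ler_normD _ _) _.
rewrite normrM (ger0_norm (_ : 0 <= x - x0)); last lra.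
have h3 : `|df c| * (x - x0) <= C * (2 + x) ^+ n * (2 + x).
  apply: le_trans (_ : `|df c| * (2 + x) <= _).
    apply: ler_wpM2l => //; lra.
  apply: ler_wpM2r => //; lra.
rewrite exprSr mulrDl.
have h4 : `|f x0| <= `|f x0| * ((2 + x) ^+ n * (2 + x)).
  rewrite -exprSr ler_peMr //.
have h5 : C * (2 + x) ^+ n * (2 + x) = C * ((2 + x) ^+ n * (2 + x)) by ring.
lra.
Qed.

Lemma near_neq0_poly (b : {poly R}) (y : R) : b.[y] != 0 -> \forall z \near y, b.[z] != 0.
Proof.
move=> hb.
have hc : horner b z @[z --> y] --> b.[y] := @continuous_horner _ b y.
near=> z. rewrite -normr_gt0.
near: z. 
apply: (@cvgr_norm_gt _ R^o _ _ _ (horner b) b.[y] hc); by rewrite normr_gt0.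
Unshelve. all: by end_near. Qed.


Lemma MVT_open (f df : R -> R) (x y : R) : x < y ->
  (forall z, x <= z <= y -> is_derive z (1:R) f (df z)) ->
  exists c, x < c < y /\ f y - f x = df c * (y - x).
Proof.
move=> xy hd.
have h1 : forall z, z \in `]x, y[%R -> is_derive z (1:R) f (df z).
  move=> z; rewrite in_itv /= => /andP[h1 h2]; apply: hd; apply/andP; split; exact: ltW.
have h2 : {within `[x, y], continuous f}.
  apply: derivable_within_continuous => z; rewrite in_itv /= => hz.
  by have [h _] := hd z hz.
have [c hc e] := MVT xy h1 h2.
by exists c; split => //; move: hc; rewrite in_itv.
Qed.
End Helpers.


Section Main.
Variables (R : realType) (a b q : {poly R}) (lam : R).
Hypothesis hpos : positive_ratfun_on_P a b.
Hypothesis lam0 : 0 < lam.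
Hypothesis hFut : Futaki_vanishes_on_affine (weight_v a b lam) (weight_w q lam).
Variable H : R -> R.
Hypothesis hcsc : cscK_metric (weight_v a b lam) (weight_w q lam) H.

Local Notation v := (weight_v a b lam).
Local Notation w := (weight_w q lam).

Let lamn0 : lam != 0. Proof. by rewrite gt_eqF. Qed.

Lemma b_neq0 x : -1 <= x -> b.[x] != 0.
Proof. by move=> hx; have [] := hpos hx. Qed.

Lemma ab_pos x : -1 <= x -> 0 < a.[x] / b.[x].
Proof. by move=> hx; have [] := hpos hx. Qed.

Lemma a_neq0 x : -1 <= x -> a.[x] != 0.
Proof.
move=> hx; apply/eqP => h; have := ab_pos hx; by rewrite h mul0r ltxx.
Qed.

Lemma v_pos x : -1 <= x -> 0 < v x.
Proof. move=> hx; rewrite /weight_v /ratfun; apply: mulr_gt0; [exact: ab_pos | exact: expR_gt0]. Qed.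

Lemma vE : v = RG a b 1 lam.
Proof. by apply/funext => x; rewrite /weight_v /ratfun /RG expr1. Qed.

Lemma wE : w = pe lam q.
Proof. by []. Qed.

Local Notation dH := (derive1 H).

Lemma H_der x : is_derive x (1:R) H (dH x).
Proof.
have [h1 _] := hcsc.1 x.
by apply: (DeriveDef h1); rewrite derive1E.
Qed.

Lemma dH_der x : is_derive x (1:R) dH (derive1 dH x).
Proof.
have [_ h2] := hcsc.1 x.
by apply: (DeriveDef h2); rewrite derive1E.
Qed.

Lemma H_m1 : H (-1) = 0.
Proof. by case: hcsc => _ [_ [h _]]. Qed.

Lemma dH_m1 : dH (-1) = 2.
Proof. by case: hcsc => _ [_ [_ [h _]]]. Qed.

Lemma H_pos x : -1 < x -> 0 < H x.
Proof. by case: hcsc => _ [h _]; apply: h. Qed.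

Lemma ode x : -1 < x -> - (derive1 (derive1 (fun y => v y * H y)) x) = w x.
Proof. by case: hcsc => _ [_ [_ [_ h]]]; apply: h. Qed.

Definition Q1 : {poly R} := proj1_sig (cid (Dop_exists lamn0 (- q))).
Lemma Q1P : Dop lam Q1 = - q. Proof. exact: (proj2_sig (cid (Dop_exists lamn0 (- q)))). Qed.
Definition rr : {poly R} := proj1_sig (cid (Dop_exists lamn0 Q1)).
Lemma rrP : Dop lam rr = Q1. Proof. exact: (proj2_sig (cid (Dop_exists lamn0 Q1))). Qed.

Local Notation vd := (RG (RGd a b 1 lam) b 2 lam).
Definition K := derive1 (fun y => v y * H y).
Definition K2 z := v z * dH z + H z * vd z.

Lemma is_derive_vH z : b.[z] != 0 -> is_derive z (1:R) (fun y => v y * H y) (K2 z).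
Proof.
move=> bz; rewrite vE.
have h := is_deriveM (is_derive_RG a 1 lam bz) (H_der z).
apply: (is_derive_eq h); rewrite /K2 vE /GRing.scale /=; ring.
Qed.

Lemma K_near y : b.[y] != 0 -> \forall z \near y, K2 z = K z.
Proof.
move=> by0; near=> z.
have bz : b.[z] != 0 by near: z; exact: near_neq0_poly.
by rewrite /K derive1E; have [_ ->] := is_derive_vH bz.
Unshelve. all: by end_near. Qed.

Lemma K2_derivable y : b.[y] != 0 -> derivable K2 y 1.
Proof.
move=> by0; rewrite /K2.
have hv : derivable v y 1 by rewrite vE; have [] := is_derive_RG a 1 lam by0.
have hvd : derivable vd y 1 by have [] := is_derive_RG (RGd a b 1 lam) 2 lam by0.
have hH : derivable H y 1 by have [] := H_der y.
have hdH : derivable dH y 1 by have [] := dH_der y.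
apply: derivableD; apply: derivableM => //.
Qed.

Lemma K_der y : b.[y] != 0 -> is_derive y (1:R) K (derive1 K y).
Proof.
move=> by0; have hd : derivable K y 1.
  exact: near_eq_derivable (K_near by0) (K2_derivable by0).
by apply: (DeriveDef hd); rewrite derive1E.
Qed.


Lemma K_eq (z : R) : b.[z] != 0 -> K z = K2 z.
Proof. by move=> bz; rewrite /K derive1E; have [_ ->] := is_derive_vH bz. Qed.

Definition G z := v z * H z - pe lam rr z.
Definition G1 z := K z - pe lam Q1 z.

Lemma G_der (z : R) : -1 <= z -> is_derive z (1:R) G (G1 z).
Proof.
move=> hz; have bz := b_neq0 hz.
have h := is_deriveB (is_derive_vH bz) (is_derive_pe lam rr z).
have -> : G = (fun y => v y * H y) - pe lam rr by [].
apply: (is_derive_eq h); by rewrite /G1 rrP K_eq.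
Qed.

Lemma G1_der (y : R) : -1 <= y -> is_derive y (1:R) G1 (derive1 K y + w y).
Proof.
move=> hy; have bz := b_neq0 hy.
have h := is_deriveB (K_der bz) (is_derive_pe lam Q1 y).
have -> : G1 = K - pe lam Q1 by [].
apply: (is_derive_eq h); rewrite Q1P wE /pe hornerN; ring.
Qed.

Lemma G1_const (x : R) : -1 <= x -> G1 x = G1 (-1).
Proof.
move=> hx; have [<-//|xm] := eqVneq x (-1).
have hlt : -1 < x by rewrite lt_def hx andbT; apply: contra_neq xm => ->.
have [c [hc e]] := MVT_open hlt (fun z hz => G1_der (proj1 (andP hz))).
move/andP: hc => [c1 _].
have : derive1 K c + w c = 0 by have := ode c1; rewrite /K => <-; ring.
move=> h0; rewrite h0 mul0r in e; apply/eqP; rewrite -subr_eq0 e //.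
Qed.

Lemma G1_m1 : G1 (-1) = 2 * v (-1) - pe lam Q1 (-1).
Proof.
rewrite /G1 K_eq; last exact: b_neq0.
by rewrite /K2 dH_m1 H_m1 mul0r addr0 mulrC.
Qed.

Lemma G_aff (x : R) : -1 <= x -> G x = G (-1) + G1 (-1) * (x + 1).
Proof.
move=> hx.
have [c [hc e]] := MVT_closed hx (fun z hz => G_der (proj1 (andP hz))).
move/andP: hc => [c1 _].
rewrite G1_const // in e; have -> : G1 (-1) * (x + 1) = G1 (-1) * (x - -1) by ring.
rewrite -e; ring.
Qed.

Lemma G_m1 : G (-1) = - pe lam rr (-1).
Proof. by rewrite /G H_m1 mulr0 sub0r. Qed.


Local Notation mu := (@lebesgue_measure R).

Lemma pe_N (P : {poly R}) x : pe lam (- P) x = - pe lam P x.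
Proof. by rewrite /pe hornerN mulNr. Qed.

Lemma fut1 : pe lam Q1 (-1) = 2 * v (-1).
Proof.
have h := hFut 0 1.
have e : (\int[mu]_(x in `[(-1 : R)%R, +oo[%classic) ((0 * x + 1) * w x)%:E = (pe lam Q1 (-1))%:E)%E.
  rewrite (_ : (fun x => ((0 * x + 1) * w x)%:E) = fun x => (pe lam q x)%:E); last first.
    by apply/funext => x; rewrite mul0r add0r mul1r.
  have hQ : Dop lam (- Q1) = q by rewrite DopN Q1P opprK.
  by rewrite (integral_pe lam0 hQ) pe_N opprK.
move: h; rewrite /Futaki e -EFinB => -[] /eqP; rewrite subr_eq0 => /eqP <-.
ring.
Qed.

Lemma fut2 : pe lam rr (-1) = 0.
Proof.
have h := hFut 1 0.
have e : (\int[mu]_(x in `[(-1 : R)%R, +oo[%classic) ((1 * x + 0) * w x)%:E = (- pe lam (rr - 'X * Q1) (-1))%:E)%E.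
  rewrite (_ : (fun x => ((1 * x + 0) * w x)%:E) = fun x => (pe lam ('X * q) x)%:E); last first.
    by apply/funext => x; rewrite mul1r addr0 /pe hornerM hornerX mulrA.
  have hQ : Dop lam (rr - 'X * Q1) = 'X * q by apply: Dop_Xmul; [exact: rrP | exact: Q1P].
  by rewrite (integral_pe lam0 hQ).
move: h; rewrite /Futaki e -EFinB => -[] /eqP; rewrite subr_eq0 => /eqP h.
move: h; rewrite pe_B /pe hornerM hornerX -/(pe lam Q1 (-1)) => h.
have f1 := fut1; rewrite /pe in f1.
rewrite /pe; lra.
Qed.


Lemma E_pos (x : R) : 0 < expR (- (lam * x)). Proof. exact: expR_gt0. Qed.

Lemma vH_eq (x : R) : -1 <= x -> v x * H x = pe lam rr x.
Proof.
move=> hx; have := G_aff hx; rewrite G_m1 fut2 G1_m1 fut1 /G; lra.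
Qed.

Lemma H_eq (x : R) : -1 <= x -> H x = (rr * b).[x] / a.[x].
Proof.
move=> hx; have := vH_eq hx; rewrite /weight_v /ratfun /pe hornerM => h.
have ea := a_neq0 hx; have eb := b_neq0 hx; have eE := E_pos x.
have eE' : expR (- (lam * x)) != 0 by rewrite gt_eqF.
apply: (@mulfI _ (a.[x] / b.[x] * expR (- (lam * x)))).
  by rewrite !mulf_neq0 ?invr_eq0.
rewrite h; field; by rewrite ea eb.
Qed.

Lemma rr_m1 : rr.[-1] = 0.
Proof.
have := fut2; rewrite /pe => /eqP; rewrite mulf_eq0 (gt_eqF (E_pos _)) orbF => /eqP //.
Qed.

Lemma Q1_m1 : Q1.[-1] != 0.
Proof.
have := fut1; rewrite /pe => h.
have hv := v_pos (lexx (-1 : R)).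
apply/eqP => h0; move: h; rewrite h0 mul0r => h; lra.
Qed.

Lemma rr_root : root rr (-1).
Proof. by rewrite /root rr_m1. Qed.

Definition ss : {poly R} := proj1_sig (cid (elimT (factor_theorem rr (-1)) rr_root)).
Lemma ssP : rr = ss * ('X + 1).
Proof.
have := proj2_sig (cid (elimT (factor_theorem rr (-1)) rr_root)).
by rewrite -/ss polyCN opprK.
Qed.

Lemma ss_m1 : ss.[-1] != 0.
Proof.
have := Q1_m1; rewrite -rrP /Dop {1}ssP derivM derivD derivX derivC addr0.
by rewrite !hornerE rr_m1 /= !hornerE; rewrite (_ : -1 + 1 = 0 :> R) ?mulr0 ?add0r ?mulr0 ?subr0 //; ring.
Qed.

Lemma H_eq2 (x : R) : -1 <= x -> H x = (x + 1) * (ss * b).[x] / a.[x].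
Proof.
move=> hx; rewrite H_eq // ssP !hornerM hornerD hornerX hornerC; ring.
Qed.

Lemma sb_neq0 (x : R) : -1 <= x -> (ss * b).[x] != 0.
Proof.
move=> hx; have [->|xm] := eqVneq x (-1).
  by rewrite hornerM mulf_neq0 // ?ss_m1 ?b_neq0.
have hlt : -1 < x by rewrite lt_def hx andbT; apply: contra_neq xm => ->.
apply/eqP => h0; have := H_pos hlt; rewrite H_eq2 // h0 mulr0 mul0r ltxx //.
Qed.


Lemma powR_le1D (y e : R) : 0 < y -> 0 <= e <= 1 -> y `^ e <= 1 + y.
Proof.
move=> y0 /andP[e0 e1]; have [y1|y1] := leP y 1.
  have hy : 0 < y <= 1 by rewrite y0 y1.
  have := @ger_powR _ y hy 0 e e0; rewrite powRr0 => h; lra.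
have := @ler_powR _ y (ltW y1) e 1 e1; rewrite powRr1; [lra | lra].
Qed.

Lemma vbound (eps : R) : 0 < eps < 1 -> forall (C : R) (n : nat), 0 <= C ->
  exists C', forall x y : R, -1 <= x -> `|y| <= C * (2 + x) ^+ n -> v x `^ eps * `|y| <= C'.
Proof.
move=> /andP[e0 e1] C n C0.
have [mb [mb0 hmb]] := poly_lower (fun x hx => b_neq0 hx).
have [Ca [Ca0 hCa]] := poly_bound a.
have el : 0 < eps * lam by apply: mulr_gt0.
have [C3 hC3] := exp_poly (size a + n) el.
exists ((1 + Ca / mb) * C * C3) => x y hx hy.
have ab0 := ab_pos hx.
have Ex := E_pos x.
have hve : v x `^ eps = (a.[x] / b.[x]) `^ eps * expR (- ((eps * lam) * x)).
  rewrite /weight_v /ratfun powRM; [|exact: ltW|exact: ltW].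
  by rewrite -expRM; congr (_ * expR _); ring.
have hab : a.[x] / b.[x] <= Ca / mb * (2 + x) ^+ size a.
  have -> : a.[x] / b.[x] = `|a.[x]| / `|b.[x]| by rewrite -normf_div ger0_norm // ltW.
  have hbx := hmb x hx; have hax := hCa x hx.
  have bx0 : 0 < `|b.[x]| by lra.
  rewrite ler_pdivrMr //; apply: le_trans hax _.
  have -> : Ca / mb * (2 + x) ^+ size a * `|b.[x]| = (Ca * (2 + x) ^+ size a) * (`|b.[x]| / mb) by field; lra.
  rewrite -[X in X <= _]mulr1; apply: ler_wpM2l.
    by apply: mulr_ge0 => //; apply: exprn_ge0; lra.
  by rewrite ler_pdivlMr // mul1r.
have t1 : 1 <= (2 + x) ^+ size a by apply: exprn_ege1; lra.
have hp := powR_le1D ab0 (_ : 0 <= eps <= 1).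
have hp' : (a.[x] / b.[x]) `^ eps <= (1 + Ca / mb) * (2 + x) ^+ size a.
  apply: le_trans (hp _) _; first by rewrite (ltW e0) (ltW e1).
  have : 0 <= Ca / mb by apply: divr_ge0 => //; exact: ltW.
  nra.
rewrite hve.
have hC3x := hC3 x hx; rewrite exprD in hC3x.
have y0 : 0 <= `|y| := normr_ge0 y.
have E'0 : 0 < expR (- (eps * lam * x)) := expR_gt0 _.
have pa0 : 0 <= (a.[x] / b.[x]) `^ eps := powR_ge0 _ _.
have K0 : 0 <= 1 + Ca / mb by apply: addr_ge0 => //; apply: divr_ge0 => //; exact: ltW.
have step1 : (a.[x] / b.[x]) `^ eps * expR (- (eps * lam * x)) * `|y| <=
   ((1 + Ca / mb) * (2 + x) ^+ size a) * expR (- (eps * lam * x)) * (C * (2 + x) ^+ n).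
  apply: ler_pM => //.
    by apply: mulr_ge0 => //; exact: ltW.
  by apply: ler_wpM2r => //; exact: ltW.
apply: le_trans step1 _.
have -> : (1 + Ca / mb) * (2 + x) ^+ size a * expR (- (eps * lam * x)) * (C * (2 + x) ^+ n)
   = (1 + Ca / mb) * C * ((2 + x) ^+ size a * (2 + x) ^+ n * expR (- (eps * lam * x))) by ring.
apply: ler_wpM2l => //; exact: mulr_ge0.
Qed.

Lemma RG0_bound (N : {poly R}) (k : nat) : exists C n, 0 <= C /\
  forall x, -1 <= x -> `|RG N a k 0 x| <= C * (2 + x) ^+ n.
Proof.
have [ma [ma0 hma]] := poly_lower (fun x hx => a_neq0 hx).
have [CN [CN0 hCN]] := poly_bound N.
exists (CN / ma ^+ k), (size N); split.
  by apply: divr_ge0 => //; apply: exprn_ge0; exact: ltW.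
move=> x hx; rewrite /RG mul0r oppr0 expR0 mulr1 normf_div normrX.
have hax := hma x hx.
have pk : 0 < ma ^+ k by apply: exprn_gt0.
have pk' : ma ^+ k <= `|a.[x]| ^+ k by apply: lerXn2r; rewrite ?nnegrE; lra.
rewrite ler_pdivrMr; last lra.
apply: le_trans (hCN x hx) _.
have -> : CN / ma ^+ k * (2 + x) ^+ size N * `|a.[x]| ^+ k = CN * (2 + x) ^+ size N * (`|a.[x]| ^+ k / ma ^+ k).
  by field; lra.
rewrite -[X in X <= _]mulr1; apply: ler_wpM2l.
  by apply: mulr_ge0 => //; apply: exprn_ge0; lra.
by rewrite ler_pdivlMr // mul1r.
Qed.

Lemma H_RG (x : R) : -1 <= x -> H x = RG (rr * b) a 1 0 x.
Proof. by move=> hx; rewrite H_eq // /RG expr1 mul0r oppr0 expR0 mulr1. Qed.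

Definition N1 := RGd (rr * b) a 1 0.
Definition N2 := RGd N1 a 2 0.

Lemma dH_is (x : R) : -1 < x -> is_derive x (1:R) H (RG N1 a 2 0 x).
Proof.
move=> hx; have ax := a_neq0 (ltW hx).
apply: (near_eq_is_derive _ (is_derive_RG (rr * b) 1 0 ax)).
near=> z; apply/esym/H_RG; apply: ltW.
near: z; exact: lt_nbhsr.
Unshelve. all: by end_near. Qed.

Lemma dH_eq (x : R) : -1 < x -> dH x = RG N1 a 2 0 x.
Proof. by move=> hx; rewrite derive1E; have [_ ->] := dH_is hx. Qed.

Lemma ddH_eq (x : R) : -1 < x -> derive1 dH x = RG N2 a 3 0 x.
Proof.
move=> hx; have ax := a_neq0 (ltW hx).
have h : is_derive x (1:R) dH (RG N2 a 3 0 x).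
  apply: (near_eq_is_derive _ (is_derive_RG N1 2 0 ax)).
  near=> z; apply/esym/dH_eq.
  near: z; exact: lt_nbhsr.
by rewrite derive1E; have [_ ->] := h.
Unshelve. all: by end_near. Qed.

Lemma sq_bound (y C t : R) (n : nat) : 0 <= C -> 1 <= t -> `|y| <= C * t ^+ n ->
  `|y ^+ 2| <= C ^+ 2 * t ^+ (n * 2).
Proof.
move=> C0 t1 hy; rewrite normrX exprM -exprMn; apply: lerXn2r => //; rewrite ?nnegrE //.
by apply: mulr_ge0 => //; apply: exprn_ge0; lra.
Qed.

Lemma item1 (eps : R) : 0 < eps < 1 ->
  exists C, forall x, -1 <= x -> v x `^ eps * H x ^+ 2 <= C.
Proof.
move=> he; have [C [n [C0 hC]]] := RG0_bound (rr * b) 1.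
have [C' hC'] := vbound he (n * 2) (exprn_ge0 2 C0).
exists C' => x hx; apply: le_trans (hC' x _ hx _).
  by rewrite [X in _ <= _ * X]ger0_norm // sqr_ge0.
apply: sq_bound => //; first lra.
by rewrite H_RG //; exact: hC.
Qed.

Lemma dH_bound : exists C n, 0 <= C /\ forall x, -1 <= x -> `|dH x| <= C * (2 + x) ^+ n.
Proof.
have [C [n [C0 hC]]] := RG0_bound N1 2.
exists (C + 2), n; split; first lra.
move=> x hx; have t1 : 1 <= (2 + x) ^+ n by apply: exprn_ege1; lra.
have [->|xm] := eqVneq x (-1).
  rewrite dH_m1 (_ : 2 + -1 = 1 :> R); last lra.
  by rewrite expr1n mulr1 ger0_norm; lra.
have hlt : -1 < x by rewrite lt_def hx andbT; apply: contra_neq xm => ->.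
rewrite dH_eq //; apply: le_trans (hC x hx) _; rewrite ler_wpM2r //; [lra|lra].
Qed.

Lemma item2 (eps : R) : 0 < eps < 1 ->
  exists C, forall x, -1 <= x -> v x `^ eps * (dH x) ^+ 2 <= C.
Proof.
move=> he; have [C [n [C0 hC]]] := dH_bound.
have [C' hC'] := vbound he (n * 2) (exprn_ge0 2 C0).
exists C' => x hx; apply: le_trans (hC' x _ hx _).
  by rewrite [X in _ <= _ * X]ger0_norm // sqr_ge0.
apply: sq_bound => //; first lra.
exact: hC.
Qed.

Lemma item3 : exists dbar C : R, 0 < dbar /\ 0 < C /\
  forall x, -1 <= x <= -1 + dbar -> (derive1 dH x) ^+ 2 < C.
Proof.
have [C [n [C0 hC]]] := RG0_bound N2 3.
set d0 := derive1 dH (-1).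
exists 1, ((C * 2 ^+ n) ^+ 2 + d0 ^+ 2 + 1); split; first lra.
have h0 : 0 <= (C * 2 ^+ n) ^+ 2 := sqr_ge0 _.
have h1 : 0 <= d0 ^+ 2 := sqr_ge0 _.
split; first lra.
move=> x /andP[hx1 hx2].
have [->|xm] := eqVneq x (-1); first by rewrite -/d0; lra.
have hlt : -1 < x by rewrite lt_def hx1 andbT; apply: contra_neq xm => ->.
rewrite ddH_eq //.
have hb : `|RG N2 a 3 0 x| <= C * 2 ^+ n.
  apply: le_trans (hC x hx1) _; apply: ler_wpM2l => //.
  apply: lerXn2r; rewrite ?nnegrE; lra.
have : (RG N2 a 3 0 x) ^+ 2 <= (C * 2 ^+ n) ^+ 2.
  rewrite -real_normK ?num_real //; apply: lerXn2r; rewrite ?nnegrE //.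
  apply: mulr_ge0 => //; exact: exprn_ge0.
lra.
Qed.

Section U.
Variable u : R -> R.
Hypothesis hu : symplectic_potential H u.
Local Notation du := (derive1 u).

Lemma u_der (x : R) : -1 < x -> is_derive x (1:R) u (du x).
Proof.
move=> hx; have [h1 _] := hu hx.
by apply: (DeriveDef h1); rewrite derive1E.
Qed.

Lemma du_der (x : R) : -1 < x -> is_derive x (1:R) du (H x)^-1.
Proof.
move=> hx; have [_ [h2 h3]] := hu hx.
by apply: (DeriveDef h2); rewrite -derive1E.
Qed.

Lemma invH_eq (x : R) : -1 < x -> (H x)^-1 = a.[x] / ((x + 1) * (ss * b).[x]).
Proof.
move=> hx; rewrite H_eq2 ?ltW //.
have := a_neq0 (ltW hx); have := sb_neq0 (ltW hx) => h1 h2.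
have h3 : x + 1 != 0 by rewrite gt_eqF //; lra.
by rewrite invf_div mulrC.
Qed.

Lemma invH_bound : exists Ca (na : nat) msb, 0 <= Ca /\ 0 < msb /\
  forall x, -1 < x -> `|(H x)^-1| <= Ca * (2 + x) ^+ na / (msb * (x + 1)).
Proof.
have [msb [msb0 hmsb]] := poly_lower (fun x hx => sb_neq0 hx).
have [Ca [Ca0 hCa]] := poly_bound a.
exists Ca, (size a), msb; split => //; split => //.
move=> x hx; rewrite invH_eq // normf_div normrM (ger0_norm (_ : 0 <= x + 1)); last lra.
have x1 : 0 < x + 1 by lra.
have hs := hmsb x (ltW hx).
have ha := hCa x (ltW hx).
apply: ler_pM => //.
  by rewrite invr_ge0; apply: mulr_ge0 => //; lra.
rewrite lef_pV2 ?posrE.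
- by rewrite mulrC; apply: ler_wpM2l => //; lra.
- by apply: mulr_gt0 => //; lra.
- by apply: mulr_gt0.
Qed.

Definition Lf (y : R) := ln (y + 1).
Definition Gf (y : R) := (y + 1) * (1 - Lf y).

Lemma sh_der (z : R) : is_derive z (1:R) (fun y : R => y + 1) 1.
Proof.
have h := is_deriveD (is_derive_id z 1) (is_derive_cst (1:R) z 1).
apply: (is_derive_eq h); by rewrite addr0.
Qed.

Lemma Lf_der (z : R) : -1 < z -> is_derive z (1:R) Lf (z + 1)^-1.
Proof.
move=> hz; have z1 : 0 < z + 1 by lra.
have h := @is_derive1_comp R (@ln R) (fun y => y + 1) z _ _ (is_derive1_ln z1) (sh_der z).
apply: (is_derive_eq h); by rewrite mulr1.
Qed.

Lemma Gf_der (z : R) : -1 < z -> is_derive z (1:R) Gf (- Lf z).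
Proof.
move=> hz; have z1 : z + 1 != 0 by rewrite gt_eqF //; lra.
have h1 := is_deriveB (is_derive_cst (1:R) z 1) (Lf_der hz).
have h := is_deriveM (sh_der z) h1.
have -> : Gf = (fun y => y + 1) * (cst 1 - Lf) by [].
apply: (is_derive_eq h); rewrite /GRing.scale /= !fctE /cst; field; exact: z1.
Qed.

Lemma Lf_le0 (z : R) : -1 < z <= 0 -> Lf z <= 0.
Proof. move=> /andP[h1 h2]; rewrite /Lf; apply: ln_le0; lra. Qed.

Lemma Lf0 : Lf 0 = 0.
Proof. by rewrite /Lf add0r ln1. Qed.

Lemma Gf_ge0 (z : R) : -1 < z <= 0 -> 0 <= Gf z.
Proof.
move=> hz; have := Lf_le0 hz; move/andP: hz => [h1 h2] h.
rewrite /Gf; apply: mulr_ge0; lra.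
Qed.

Lemma Gf0 : Gf 0 = 1.
Proof. by rewrite /Gf Lf0 add0r subr0 mulr1. Qed.

Lemma u_near : exists B, forall x, -1 < x <= 0 -> `|u x| <= B.
Proof.
have [Ca [na [msb [Ca0 [msb0 hb]]]]] := invH_bound.
set Kc := Ca * 2 ^+ na / msb.
have Kc0 : 0 <= Kc by apply: divr_ge0; [apply: mulr_ge0 => //; exact: exprn_ge0 | exact: ltW].
have hK (z : R) : -1 < z <= 0 -> `|(H z)^-1| <= Kc * (z + 1)^-1.
  move=> /andP[z1 z0]; apply: le_trans (hb z z1) _.
  have zp : 0 < z + 1 by lra.
  have -> : Kc * (z + 1)^-1 = Ca * 2 ^+ na / (msb * (z + 1)).
    by rewrite /Kc; field; apply/andP; split; rewrite gt_eqF.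
  apply: ler_wpM2r; first by rewrite invr_ge0; apply: mulr_ge0; lra.
  apply: ler_wpM2l => //; apply: lerXn2r; rewrite ?nnegrE; lra.
have in0 (z : R) : -1 < z <= 0 -> forall y : R, z <= y <= 0 -> -1 < y <= 0.
  by move=> /andP[h1 h2] y /andP[h3 h4]; apply/andP; split; lra.
have hKi (y : R) : -1 < y <= 0 -> - (Kc * (y + 1)^-1) <= (H y)^-1 <= Kc * (y + 1)^-1.
  by move=> hy; rewrite -ler_norml; exact: hK.
have hdu (z : R) : -1 < z <= 0 -> du 0 + Kc * Lf z <= du z /\ du z <= du 0 - Kc * Lf z.
  move=> hz; have z0 : z <= 0 by case/andP: hz.
  split.
    have := @mono_le R (fun y => Kc * Lf y - du y) (fun y => Kc * (y + 1)^-1 - (H y)^-1) z 0 z0.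
    rewrite /= Lf0 mulr0 => h; suff : Kc * Lf z - du z <= 0 - du 0 by lra.
    apply: h.
      move=> y hy; have /andP[y1 _] := in0 z hz y hy.
      have h2 := is_deriveB (is_deriveZ Kc (Lf_der y1)) (du_der y1).
      by apply: (is_derive_eq h2).
    move=> y hy; have := hKi y (in0 z hz y hy); lra.
  have := @mono_le R (fun y => du y + Kc * Lf y) (fun y => (H y)^-1 + Kc * (y + 1)^-1) z 0 z0.
  rewrite /= Lf0 mulr0 => h; suff : du z + Kc * Lf z <= du 0 + 0 by lra.
  apply: h.
    move=> y hy; have /andP[y1 _] := in0 z hz y hy.
    have h2 := is_deriveD (du_der y1) (is_deriveZ Kc (Lf_der y1)).
    by apply: (is_derive_eq h2).
  move=> y hy; have := hKi y (in0 z hz y hy); lra.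
exists (`|u 0| + `|du 0| + Kc) => x hx.
have x0 : x <= 0 by case/andP: hx.
have hx1 : `|x| <= 1 by rewrite ler_norml; case/andP: hx => h1 h2; apply/andP; split; lra.
have hux : `|du 0 * x| <= `|du 0| by rewrite normrM; apply: ler_piMr.
have hG := Gf_ge0 hx.
have up : u x - du 0 * x + Kc * Gf x <= u 0 - du 0 * 0 + Kc * Gf 0.
  have := @mono_le R (fun y => u y - du 0 * y + Kc * Gf y) (fun y => du y - du 0 - Kc * Lf y) x 0 x0.
  rewrite /=; apply.
    move=> y hy; have /andP[y1 _] := in0 x hx y hy.
    have h2 := is_deriveD (is_deriveB (u_der y1) (is_deriveZ (du 0) (is_derive_id y 1))) (is_deriveZ Kc (Gf_der y1)).
    apply: (is_derive_eq h2); rewrite /GRing.scale /=; ring.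
  move=> y hy; have [h1 _] := hdu y (in0 x hx y hy); lra.
have lo : - u x + du 0 * x + Kc * Gf x <= - u 0 + du 0 * 0 + Kc * Gf 0.
  have := @mono_le R (fun y => - u y + du 0 * y + Kc * Gf y) (fun y => - du y + du 0 - Kc * Lf y) x 0 x0.
  rewrite /=; apply.
    move=> y hy; have /andP[y1 _] := in0 x hx y hy.
    have h2 := is_deriveD (is_deriveD (is_deriveN (u_der y1)) (is_deriveZ (du 0) (is_derive_id y 1))) (is_deriveZ Kc (Gf_der y1)).
    apply: (is_derive_eq h2); rewrite /GRing.scale /=; ring.
  move=> y hy; have [_ h1] := hdu y (in0 x hx y hy); lra.
rewrite Gf0 mulr0 subr0 addr0 mulr1 in up lo.
have hKG : 0 <= Kc * Gf x by apply: mulr_ge0.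
move: hux; rewrite ler_norml => /andP[h1 h2].
have n1 := ler_norm (u 0).
have n2 : - u 0 <= `|u 0| by rewrite -normrN ler_norm.
rewrite ler_norml; apply/andP; split; lra.
Qed.

Lemma u_far (d : R) : 0 < d <= 1 -> exists Cu Cd Ci (n : nat),
  [/\ 0 <= Cu, 0 <= Cd, 0 <= Ci & forall x, -1 + d <= x ->
   [/\ `|u x| <= Cu * (2 + x) ^+ n.+2, `|du x| <= Cd * (2 + x) ^+ n.+1
      & `|(H x)^-1| <= Ci * (2 + x) ^+ n]].
Proof.
move=> /andP[d0 d1].
have [Ca [na [msb [Ca0 [msb0 hb]]]]] := invH_bound.
set Ci := Ca / (msb * d).
have Ci0 : 0 <= Ci by apply: divr_ge0 => //; apply: mulr_ge0; lra.
have hi (x : R) : -1 + d <= x -> `|(H x)^-1| <= Ci * (2 + x) ^+ na.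
  move=> hx; have x1 : -1 < x by lra.
  apply: le_trans (hb x x1) _.
  have t0 : 0 <= (2 + x) ^+ na by apply: exprn_ge0; lra.
  have -> : Ca * (2 + x) ^+ na / (msb * (x + 1)) = (Ca * (2 + x) ^+ na) * (msb * (x + 1))^-1 by [].
  have -> : Ci * (2 + x) ^+ na = (Ca * (2 + x) ^+ na) * (msb * d)^-1 by rewrite /Ci; field; apply/andP; split; rewrite gt_eqF.
  apply: ler_wpM2l; first exact: mulr_ge0.
  rewrite lef_pV2 ?posrE; first by apply: ler_wpM2l; lra.
    by apply: mulr_gt0; lra.
  by apply: mulr_gt0; lra.
set x0 := -1 + d.
have hx0 : -1 <= x0 by rewrite /x0; lra.
have hx0' : -1 < x0 by rewrite /x0; lra.
have g1 := @growth_int R du (fun z => (H z)^-1) x0 Ci na hx0 Ci0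
   (fun z hz => du_der (lt_le_trans hx0' hz)) hi.
have Cd0 : 0 <= `|du x0| + Ci by apply: addr_ge0.
have g2 := @growth_int R u du x0 (`|du x0| + Ci) na.+1 hx0 Cd0
   (fun z hz => u_der (lt_le_trans hx0' hz)) g1.
exists (`|u x0| + (`|du x0| + Ci)), (`|du x0| + Ci), Ci, na; split => //.
  by apply: addr_ge0.
move=> x hx; split; [exact: g2 | exact: g1 | exact: hi].
Qed.

Lemma absM_pow (eps y z : R) : `|z `^ eps * y| = z `^ eps * `|y|.
Proof. by rewrite normrM ger0_norm // powR_ge0. Qed.

Lemma item4 (eps : R) : 0 < eps < 1 ->
  (exists C, forall x, -1 < x -> `|v x `^ eps * u x| <= C) /\
  (exists delta0, 0 < delta0 /\ forall delta, 0 < delta < delta0 ->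
     exists C, forall x, -1 + delta <= x ->
       `|v x `^ eps * u x| + `|v x `^ eps * du x| + `|v x `^ eps * derive1 du x| <= C).
Proof.
move=> he; split.
  have h01 : 0 < (1:R) <= 1 by apply/andP; split; lra.
  have [Cu [Cd [Ci [n [Cu0 _ _ hf]]]]] := u_far h01.
  have [B hB] := u_near.
  have B0 : 0 <= B by apply: le_trans (hB (-(2^-1)) _); [exact: normr_ge0 | apply/andP; split; lra].
  have [C1 h1] := vbound he n.+2 Cu0.
  have [C2 h2] := vbound he 0 B0.
  exists (Num.max C1 C2) => x hx; rewrite absM_pow le_max; apply/orP.
  have [x0|x0] := leP 0 x.
    left; apply: h1; [lra|]; have [] := hf x _; [lra|done].
  right; apply: h2; [lra|]; rewrite expr0 mulr1; apply: hB; apply/andP; split; lra.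
exists 1; split => // d /andP[d0 d1].
have hd : 0 < d <= 1 by rewrite d0; exact: ltW.
have [Cu [Cd [Ci [n [Cu0 Cd0 Ci0 hf]]]]] := u_far hd.
have [C1 h1] := vbound he n.+2 Cu0.
have [C2 h2] := vbound he n.+1 Cd0.
have [C3 h3] := vbound he n Ci0.
exists (C1 + C2 + C3) => x hx.
have x1 : -1 < x by lra.
have [f1 f2 f3] := hf x hx.
have [_ [_ e]] := hu x1.
rewrite !absM_pow e.
have := h1 x (u x) (ltW x1) f1.
have := h2 x (du x) (ltW x1) f2.
have := h3 x _ (ltW x1) f3.
lra.
Qed.

End U.

End Main.

Unset Implicit Arguments.
Local Close Scope classical_set_scope.

Theorem proposition1p3 (R : realType) (a b q : {poly R}) (lam : R) :
  positive_ratfun_on_P a b ->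
  0 < lam ->
  Futaki_vanishes_on_affine (weight_v a b lam) (weight_w q lam) ->
  K_stable (weight_v a b lam) (weight_w q lam) ->
  forall H : R -> R, cscK_metric (weight_v a b lam) (weight_w q lam) H ->
  forall eps : R, 0 < eps < 2^-1 -> in_H_class (weight_v a b lam) eps H.
Proof.
move=> hpos lam0 hFut _ H hcsc eps heps.
have he : 0 < eps < 1 by case/andP: heps => h1 h2; apply/andP; split; lra.
split; first exact: (item1 hpos lam0 hFut hcsc he).
split; first exact: (item2 hpos lam0 hFut hcsc he).
split; first exact: (item3 hpos lam0 hFut hcsc).
move=> u hu; exact: (item4 hpos lam0 hFut hcsc hu he).
Qed.
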